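(* Let $\mathcal{M}=(S,P,E,s_{init},L)$ be a CTMC, $\varepsilon,\delta\geq0$, let $R$ be a transitive $(\varepsilon,\delta)$-bisimulation on $\mathcal{M}$ and let $q\geq\max_{s\in S}E(s)$. Then the partition $S/R$ of $S$ into equivalence classes of $R$ is a $q\cdot(e^{\delta}(1+\varepsilon)-1)$-quasi-lumpability.
   Context: A CTMC $(S,P,E,s_{init},L)$: finite $S$, $P\colon S\to\mathrm{Distr}(S)$ (with $P(s,A)=\sum_{a\in A}P(s,a)$), $E\colon S\to\mathbb{R}_{>0}$, initial state, labeling $L\colon S\to2^{AP}$. For $R\subseteq S\times S$, $A\subseteq S$: $R(A)=\{t\mid\exists a\in A:(a,t)\in R\}$. A reflexive symmetric $R$ is an $(\varepsilon,\delta)$-bisimulation if for all $(s,s')\in R$: $L(s)=L(s')$, $|\ln E(s)-\ln E(s')|\leq\delta$, and $P(s,A)\leq P(s',R(A))+\varepsilon$ for all $A\subseteq S$. For $\tau\geq0$, a partition $\Omega=\{\Omega_1,\dots,\Omega_m\}$ of $S$ is a $\tau$-quasi-lumpability if for all $1\leq i,j\leq m$ and all $s,s'\in\Omega_i$: $|P(s,\Omega_j)\cdot E(s)-P(s',\Omega_j)\cdot E(s')|\leq\tau$. *)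

(* Defs.v *)
From HB Require Import structures.
From mathcomp Require Import all_boot all_order all_algebra.
From mathcomp Require Import reals sequences exp.
Set Implicit Arguments. Unset Strict Implicit. Unset Printing Implicit Defensive.
Import Order.TTheory GRing.Theory Num.Theory.
Local Open Scope ring_scope.

Section CTMC.
Variables (R : realType) (S : finType) (AP : Type).

Definition PA (P : S -> S -> R) (s : S) (A : {set S}) : R := \sum_(a in A) P s a.

Definition is_ctmc (P : S -> S -> R) (E : S -> R) : Prop :=
  (forall s t, 0 <= P s t) /\ (forall s, \sum_(t : S) P s t = 1) /\
  (forall s, 0 < E s).

Definition rel_image (Rl : rel S) (A : {set S}) : {set S} :=
  [set t | [exists a in A, Rl a t]].

Definition eps_delta_bisim (P : S -> S -> R) (E : S -> R) (L : S -> AP -> Prop)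
  (eps delta : R) (Rl : rel S) : Prop :=
  reflexive Rl /\ symmetric Rl /\
  forall s s', Rl s s' ->
    [/\ L s = L s',
        `|ln (E s) - ln (E s')| <= delta &
        forall A : {set S}, PA P s A <= PA P s' (rel_image Rl A) + eps].

Definition quasi_lumpability (P : S -> S -> R) (E : S -> R) (tau : R)
  (Omega : {set {set S}}) : Prop :=
  partition Omega [set: S] /\
  forall Oi Oj, Oi \in Omega -> Oj \in Omega ->
    forall s s', s \in Oi -> s' \in Oi ->
      `|PA P s Oj * E s - PA P s' Oj * E s'| <= tau.

End CTMC.

(* Main.v *)
Require Import Defs.
From HB Require Import structures.
From mathcomp Require Import all_boot all_order all_algebra.
From mathcomp Require Import reals sequences exp.
From mathcomp Require Import lra.
Import Order.TTheory GRing.Theory Num.Theory.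
Local Open Scope ring_scope.

Lemma key_ineq (R : realType) (p p' E u x eps q : R) :
  0 <= p -> 0 <= p' -> p <= 1 -> p' <= 1 -> p <= p' + eps -> 0 <= eps ->
  0 < E -> 0 < u -> E <= q -> 1 <= x -> E <= x * u ->
  p * E - p' * u <= q * (x * (1 + eps) - 1).
Proof.
move=> p0 p'0 p1 p'1 pp e0 E0 u0 Eq x1 Eu.
have T0 : 0 <= x * (1 + eps) - 1 by nra.
have h1 : x * (p * E - p' * u) <= x * p * E - p' * E.
  have hh : 0 <= x * u - E by lra.
  have := mulr_ge0 p'0 hh; nra.
have h2 : x * p * E - p' * E <= E * (x * (1 + eps) - 1).
  have a1 : 0 <= x * (p' + eps - p) by apply: mulr_ge0; lra.
  have a2 : 0 <= (1 - p') * (x - 1) by apply: mulr_ge0; lra.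
  have a3 : 0 <= E * (x * (p' + eps - p) + (1 - p') * (x - 1)).
    by apply: mulr_ge0; lra.
  nra.
have h3 : E * (x * (1 + eps) - 1) <= q * (x * (1 + eps) - 1) by apply: ler_wpM2r.
have [neg|pos] := lerP (p * E - p' * u) 0.
  have : 0 <= q * (x * (1 + eps) - 1) by nra.
  lra.
nra.
Qed.

Theorem proposition1 (R : realType) (S : finType) (AP : Type)
  (P : S -> S -> R) (E : S -> R) (s_init : S) (L : S -> AP -> Prop)
  (eps delta : R) (Rl : rel S) (q : R) :
  is_ctmc P E -> 0 <= eps -> 0 <= delta ->
  eps_delta_bisim P E L eps delta Rl -> transitive Rl ->
  (forall s, E s <= q) ->
  quasi_lumpability P E (q * (expR delta * (1 + eps) - 1))
    (equivalence_partition Rl [set: S]).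
Proof.
move=> [Pge0 [Psum Epos]] e0 d0 [refl [sym bis]] tr Eq.
split.
  apply: equivalence_partitionP => x y z _ _ _; split; first exact: refl.
  move=> Rxy; apply/idP/idP => [Rxz|Ryz].
    by apply: tr Rxz; rewrite sym.
  exact: tr Ryz.
move=> Oi Oj0 /imsetP[x _ ->] /imsetP[y _ ->] s s'.
rewrite !inE /= => Rxs Rxs'.
have Rss' : Rl s s' by apply: tr Rxs'; rewrite sym.
set Oj := [set z in [set: S] | Rl y z].
have img : rel_image Rl Oj = Oj.
  apply/setP => t; rewrite !inE /=; apply/existsP/idP => [[a /andP[]]|Ryt].
    by rewrite !inE /= => Rya Rat; apply: tr Rat.
  by exists t; rewrite !inE /= Ryt refl.
have PA01 : forall z, 0 <= PA P z Oj <= 1.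
  move=> z; apply/andP; split; first by apply: sumr_ge0 => a _.
  rewrite -(Psum z) (bigID (fun a => a \in Oj)) /= /PA lerDl.
  by apply: sumr_ge0 => a _.
have gen : forall a b, Rl a b ->
    PA P a Oj * E a - PA P b Oj * E b <= q * (expR delta * (1 + eps) - 1).
  move=> a b Rab; have [_ hln hP] := bis a b Rab.
  have Eab : E a <= expR delta * E b.
    rewrite -[E a]lnK ?posrE // -[E b in X in _ <= X]lnK ?posrE //.
    rewrite -expRD ler_expR; move: hln; rewrite ler_norml => /andP[_]; lra.
  have := PA01 a; have := PA01 b; move=> /andP[? ?] /andP[? ?].
  apply: key_ineq => //; try exact: Epos.
  - by have := hP Oj; rewrite img.
  - by rewrite -expR0 ler_expR.
have g1 := gen s s' Rss'.
have g2 := gen s' s (eq_ind _ is_true Rss' _ (sym s s')).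
rewrite ler_norml; apply/andP; split; last exact: g1.
rewrite lerNl opprB; exact: g2.
Qed.
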